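(* Let $G=(V,E)$ with weight $\mu$ be an infinite, connected, locally finite weighted graph satisfying condition $(p_0)$, let $m>1$, and fix $o\in V$. Let $(p,q)\in G_4=\{(p,q): p<0,\ q=m-1\}$. Suppose there exist constants $\alpha>0$, $C>0$ and $n_1$ such that $$W_o(n)\le C\, n^{\alpha}\quad\text{for all } n\ge n_1.$$ Then the inequality $\Delta_m u+u^p|\nabla u|^q\le 0$ on $V$ admits no nontrivial positive solution.
   Context: Setting: $G=(V,E)$ is an infinite, connected, locally finite graph with no loops and no multiple edges; $x\sim y$ means $x$ and $y$ are joined by an edge. A weight is a symmetric function $\mu:V\times V\to[0,\infty)$ with $\mu_{xy}=\mu_{yx}>0$ if and only if $x\sim y$; the vertex measure is $\mu(x)=\sum_{y\sim x}\mu_{xy}$. For $m>1$ and $u:V\to\mathbb R$, $\Delta_m u(x)=\frac{1}{\mu(x)}\sum_{y\sim x}\mu_{xy}|u(y)-u(x)|^{m-2}(u(y)-u(x))$ and $|\nabla u(x)|=\big(\sum_{y\sim x}\frac{\mu_{xy}}{2\mu(x)}(u(y)-u(x))^2\big)^{1/2}$. Condition $(p_0)$: there is a constant $p_0>1$ such that $\mu_{xy}/\mu(x)\ge 1/p_0$ for all $x\sim y$. $d(x,y)$ is the graph (shortest path) distance, $B(o,n)=\{x\in V: d(o,x)\le n\}$, and $W_o(n)=\sum_{x\in B(o,n),\,y\in V,\,d(o,x)<d(o,y)}\mu_{xy}$. A nontrivial positive solution of $\Delta_m u+u^p|\nabla u|^q\le 0$ is a non-constant function $u:V\to(0,\infty)$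 such that $\Delta_m u(x)+u(x)^p|\nabla u(x)|^q\le 0$ for every $x\in V$, with the conventions $0^0=1$, $0^q=0$ for $q>0$, and, for $q<0$, $|\nabla u(x)|^q=+\infty$ when $|\nabla u(x)|=0$ (so the inequality fails at such $x$). *)

(* Defs.v *)
From HB Require Import structures.
From mathcomp Require Import all_boot all_order all_algebra.
From mathcomp Require Import all_classical all_reals all_analysis.
Set Implicit Arguments. Unset Strict Implicit. Unset Printing Implicit Defensive.
Import Order.TTheory GRing.Theory Num.Theory.
Local Open Scope classical_set_scope.
Local Open Scope ring_scope.

(* A locally finite simple graph on V is given by its (finite) neighbour lists:
   y \in nb x  <->  x ~ y. *)
Definition simple_graph (V : eqType) (nb : V -> seq V) : Prop :=
  (forall x, uniq (nb x)) /\
  (forall x, x \notin nb x) /\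
  (forall x y, (y \in nb x) = (x \in nb y)).

Fixpoint walk (V : eqType) (nb : V -> seq V) (n : nat) (x y : V) : Prop :=
  match n with
  | 0%N => x = y
  | n'.+1 => exists2 z, z \in nb x & walk nb n' z y
  end.

Definition connected_graph (V : eqType) (nb : V -> seq V) : Prop :=
  forall x y, exists n, walk nb n x y.

Definition infinite_graph (V : eqType) : Prop := ~ finite_set [set: V].

Definition gdist (V : eqType) (nb : V -> seq V) (x y : V) : nat :=
  match pselect (exists n, `[< walk nb n x y >]) with
  | left H => ex_minn H
  | right _ => 0%N
  end.

Section Weighted.
Variables (R : realType) (V : choiceType) (nb : V -> seq V) (mu : V -> V -> R).

Definition is_weight : Prop :=
  (forall x y, mu x y = mu y x) /\
  (forall x y, (0 < mu x y) <-> (y \in nb x)) /\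
  (forall x y, 0 <= mu x y).

Definition vmeas (x : V) : R := \sum_(y <- nb x) mu x y.

Definition cond_p0 : Prop :=
  exists p0 : R, 1 < p0 /\ forall x y, y \in nb x -> p0^-1 <= mu x y / vmeas x.

Definition mlap (m : R) (u : V -> R) (x : V) : R :=
  (vmeas x)^-1 * \sum_(y <- nb x) mu x y * (`|u y - u x| `^ (m - 2) * (u y - u x)).

Definition gradn (u : V -> R) (x : V) : R :=
  Num.sqrt (\sum_(y <- nb x) mu x y / (2 * vmeas x) * (u y - u x) ^+ 2).

Definition ball (o : V) (n : nat) : set V := [set x | (gdist nb o x <= n)%N].

Definition Wo (o : V) (n : nat) : R :=
  \sum_(x \in ball o n)
     \sum_(y <- nb x | (gdist nb o x < gdist nb o y)%N) mu x y.

Definition nontriv_pos_sol (m p q : R) (u : V -> R) : Prop :=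
  (forall x, 0 < u x) /\ (exists x y, u x != u y) /\
  (forall x, mlap m u x + u x `^ p * gradn u x `^ q <= 0).
End Weighted.

(* Main.v *)
Require Import Defs.
From HB Require Import structures.
From mathcomp Require Import all_boot all_order all_algebra.
From mathcomp Require Import all_classical all_reals all_analysis.
From mathcomp Require Import zify ring lra.
Import Order.TTheory GRing.Theory Num.Theory.
Local Open Scope classical_set_scope.
Local Open Scope ring_scope.
Section Graph.
Variables (V : choiceType) (nb : V -> seq V).
Hypothesis Hsym : forall x y, (y \in nb x) = (x \in nb y).
Hypothesis Hconn : connected_graph nb.

Lemma walk_snoc k a x y : walk nb k a x -> y \in nb x -> walk nb k.+1 a y.
Proof.
elim: k a => [|k IH] a /=.
  by move=> -> yx; exists y.
by move=> [z za wz] yx; exists z => //; apply: IH.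
Qed.

Lemma walk_unsnoc k a x : walk nb k.+1 a x -> exists z, walk nb k a z /\ x \in nb z.
Proof.
elim: k a => [|k IH] a /=.
  by move=> [z za <-]; exists a.
move=> [z za wz]; have [z' [w1 h]] := IH _ wz.
by exists z'; split => //; exists z.
Qed.

Lemma gdist_le o x k : walk nb k o x -> (gdist nb o x <= k)%N.
Proof.
move=> w; rewrite /gdist; case: pselect => [H|H].
  by case: ex_minnP => n _ /(_ k); apply; apply/asboolP.
by exfalso; apply: H; exists k; apply/asboolP.
Qed.

Lemma gdist_walk o x : walk nb (gdist nb o x) o x.
Proof.
rewrite /gdist; case: pselect => [H|H].
  by case: ex_minnP => n /asboolP.
by exfalso; have [n wn] := Hconn o x; apply: H; exists n; apply/asboolP.
Qed.

Lemma gdist_nb o x y : y \in nb x -> (gdist nb o y <= (gdist nb o x).+1)%N.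
Proof. by move=> yx; apply: gdist_le; apply: walk_snoc (gdist_walk o x) yx. Qed.

Fixpoint bseq (o : V) (n : nat) : seq V :=
  match n with
  | 0%N => [:: o]
  | n'.+1 => undup (bseq o n' ++ flatten [seq nb z | z <- bseq o n'])
  end.

Lemma bseq_uniq o n : uniq (bseq o n).
Proof. by case: n => [|n] //=; apply: undup_uniq. Qed.

Lemma mem_bseq o n x : (x \in bseq o n) = (gdist nb o x <= n)%N.
Proof.
elim: n x => [|n IH] x /=.
  rewrite inE; apply/eqP/idP => [->|].
    by apply: gdist_le.
  by rewrite leqn0 => /eqP h; have := gdist_walk o x; rewrite h /= => ->.
rewrite mem_undup mem_cat IH; apply/orP/idP.
  case=> [h|/flatten_mapP [z]]; first by apply: leqW.
  rewrite IH => hz xz; have := gdist_nb o _ _ xz; move: hz; clear; lia.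
rewrite leq_eqVlt => /orP [/eqP h|h]; last by left.
right; have := gdist_walk o x; rewrite h => /walk_unsnoc [z [wz xz]].
by apply/flatten_mapP; exists z => //; rewrite IH; apply: gdist_le wz.
Qed.

Lemma bseq_nb o n x y : x \in bseq o n -> y \in nb x -> y \in bseq o n.+1.
Proof.
rewrite !mem_bseq => h yx; have := gdist_nb o _ _ yx; move: h; clear; lia.
Qed.

End Graph.
Section GP.
Variables (R : realType) (m : R).
Hypothesis Hm : 1 < m.

Definition gp (d : R) := `|d| `^ (m - 2) * d.

Lemma gp_pos d : 0 < d -> gp d = d `^ (m - 1).
Proof.
move=> d0; rewrite /gp ger0_norm ?ltW // mulrC.
have -> : m - 2 = (m - 1) - 1 by rewrite -addrA -opprD.
by apply: mulr_powRB1; rewrite ?ltW // subr_gt0.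
Qed.

Lemma gp_opp d : gp (- d) = - gp d.
Proof. by rewrite /gp normrN mulrN. Qed.

Lemma gp0 : gp 0 = 0.
Proof. by rewrite /gp mulr0. Qed.

Lemma gp_neg d : d < 0 -> gp d = - ((- d) `^ (m - 1)).
Proof. by move=> d0; rewrite -(opprK d) gp_opp gp_pos ?opprK // oppr_gt0. Qed.

Lemma gp_nneg d : 0 <= d -> gp d = d `^ (m - 1).
Proof.
rewrite le_eqVlt => /orP [/eqP <-|d0]; last by apply: gp_pos.
by rewrite gp0 powR0 // subr_eq0 (gt_eqF Hm).
Qed.

Lemma gp_npos d : d <= 0 -> gp d = - ((- d) `^ (m - 1)).
Proof. by move=> d0; rewrite -(opprK d) gp_opp gp_nneg ?opprK // oppr_ge0. Qed.

Lemma gp_mono a b : a <= b -> gp a <= gp b.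
Proof.
have m1 : 0 <= m - 1 by rewrite subr_ge0 ltW.
move=> ab; case: (lerP 0 a) => a0.
  rewrite !gp_nneg //; last by apply: le_trans ab.
  by apply: ge0_ler_powR => //; rewrite nnegrE (le_trans a0 ab).
rewrite (gp_npos _ (ltW a0)); case: (lerP 0 b) => b0.
  by rewrite gp_nneg // (le_trans _ (powR_ge0 _ _)) // oppr_le0 powR_ge0.
rewrite (gp_npos b (ltW b0)) lerN2; apply: ge0_ler_powR => //.
- by rewrite nnegrE oppr_ge0 ltW.
- by rewrite nnegrE oppr_ge0 ltW.
- by rewrite lerN2.
Qed.

Lemma gp_le0 d : d <= 0 -> gp d <= 0.
Proof. by move=> d0; rewrite -gp0; apply: gp_mono. Qed.

Lemma gp_ge0 d : 0 <= d -> 0 <= gp d.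
Proof. by move=> d0; rewrite -gp0; apply: gp_mono. Qed.

End GP.
Section Sums.
Variable (R : realType).

Lemma sum_filter_swap (T : eqType) (s t : seq T) (f : T -> R) :
  uniq s -> uniq t ->
  \sum_(x <- s | x \in t) f x = \sum_(x <- t | x \in s) f x.
Proof.
move=> us ut; rewrite -[LHS]big_filter -[RHS]big_filter; apply: perm_big.
apply: uniq_perm; rewrite ?filter_uniq // => x.
by rewrite !mem_filter andbC.
Qed.

Lemma sum_change_seq (T : eqType) (s B : seq T) (P : pred T) (f : T -> R) :
  uniq s -> uniq B -> (forall y, y \in s -> P y -> y \in B) ->
  \sum_(y <- s | P y) f y = \sum_(y <- B | (y \in s) && P y) f y.
Proof.
move=> us uB h; rewrite -[LHS]big_filter -[RHS]big_filter; apply: perm_big.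
apply: uniq_perm; rewrite ?filter_uniq // => x.
rewrite !mem_filter; apply/andP/andP => [[Px xs]|[/andP [xs Px] _]] //.
by split => //; [apply/andP | apply: h].
Qed.

End Sums.
Arguments sum_filter_swap {R T s t f}.
Arguments sum_change_seq {R T s B P f}.

Section Flux.
Variables (R : realType) (V : choiceType) (nb : V -> seq V) (mu : V -> V -> R).
Hypothesis Hsym : forall x y, (y \in nb x) = (x \in nb y).
Hypothesis Hu : forall x, uniq (nb x).
Variable F : V -> V -> R.
Hypothesis Fanti : forall x y, F y x = - F x y.

Lemma flux (A : seq V) : uniq A ->
  \sum_(x <- A) \sum_(y <- nb x) F x y =
  \sum_(x <- A) \sum_(y <- nb x | y \notin A) F x y.
Proof.
move=> uA.
have -> : \sum_(x <- A) \sum_(y <- nb x) F x y =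
   \sum_(x <- A) \sum_(y <- nb x | y \in A) F x y +
   \sum_(x <- A) \sum_(y <- nb x | y \notin A) F x y.
  by rewrite -big_split /=; apply: eq_bigr => x _; rewrite (bigID (mem A)).
set I := \sum_(x <- A) _.
suff h : I = - I.
  have -> : I = 0.
    have : I *+ 2 = 0 by rewrite mulr2n {2}h addrN.
    by move/eqP; rewrite mulrn_eq0 /= => /eqP.
  by rewrite add0r.
rewrite {1}/I.
under eq_bigr => x _ do rewrite (sum_filter_swap (Hu x) uA) big_mkcond /=.
rewrite exchange_big /= /I -sumrN; apply eq_bigr => y _.
rewrite (sum_filter_swap (Hu y) uA) -sumrN [RHS]big_mkcond /=.
apply: eq_bigr => x _; rewrite -Hsym; case: ifP => _; [by rewrite (Fanti x y) opprK | by rewrite ?oppr0].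
Qed.

End Flux.
Section ExpPoly.
Variable R : realType.

Lemma ln_le_lin (e x : R) : 0 < e -> 0 < x -> ln x <= e * x - 1 - ln e.
Proof.
move=> e0 x0.
have h := @le_ln1Dx R (e * x - 1).
have : ln (e * x) <= e * x - 1.
  have hx : -1 < e * x - 1 by rewrite ltrBrDr addNr; exact: mulr_gt0.
  by have := h hx; rewrite [1 + _]addrC subrK.
rewrite lnM ?posrE //; lra.
Qed.

Lemma exp_vs_poly (r d M a : R) (N n1 : nat) : 1 < r -> 0 < d -> 0 < M -> 0 < a ->
  (forall k, (n1 <= k)%N -> r ^+ k * d <= M * ((N + k)%:R `^ a)) -> False.
Proof.
move=> r1 d0 M0 a0 H.
set L := ln r.
have L0 : 0 < L by apply: ln_gt0.
set e := L / (2 * a).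
have e0 : 0 < e by apply: divr_gt0 => //; apply: mulr_gt0.
have ae : a * e = L / 2.
  by rewrite /e; field; rewrite gt_eqF.
set Q := ln M - ln d + L / 2 * N%:R - a * (1 + ln e).
set k := (n1 + Num.Def.trunc (2 * Q / L)).+1.
have kbig : 2 * Q / L < k%:R.
  apply: lt_le_trans (truncnS_gt _) _; by rewrite ler_nat /k ltnS leq_addl.
have kpos : (0 < N + k)%N by rewrite /k; lia.
have X0 : 0 < (N + k)%:R :> R by rewrite ltr0n.
have := H k (leq_trans (leq_addr _ _) (leqnSn _)).
rewrite -ler_ln ?posrE; last first.
- by apply: mulr_gt0 => //; apply: powR_gt0.
- by apply: mulr_gt0 => //; apply: exprn_gt0; apply: lt_trans r1.
rewrite lnM ?posrE; last 2 first.
- by apply: exprn_gt0; apply: lt_trans r1.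
- done.
rewrite lnM ?posrE; last 2 first.
- done.
- by apply: powR_gt0.
rewrite lnXn; last by apply: lt_trans r1.
rewrite ln_powR -/L.
have h1 := ln_le_lin _ _ e0 X0.
have h2 : a * ln (N + k)%:R <= a * (e * (N + k)%:R - 1 - ln e).
  by rewrite ler_wpM2l // ltW.
have h3 : a * (e * (N + k)%:R - 1 - ln e) = L / 2 * N%:R + L / 2 * k%:R - a * (1 + ln e).
  by rewrite mulrBr mulrBr mulrA ae natrD; ring.
have h4 : L *+ k = L * k%:R by rewrite mulr_natr.
have h5 : Q < L / 2 * k%:R.
  have e1 : L / 2 * (2 * Q / L) = Q by field; rewrite gt_eqF.
  by rewrite -{1}e1 ltr_pM2l // divr_gt0.
rewrite h4 => h6.
have h7 : L * k%:R = 2 * (L / 2 * k%:R) by field.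
move: h2 h5 h6; rewrite h3 h7 /Q; lra.
Qed.
End ExpPoly.
Section Main.
Variables (R : realType) (V : choiceType) (nb : V -> seq V) (mu : V -> V -> R).
Variables (m p p0 T : R) (u : V -> R) (o : V).
Hypothesis Hsg : simple_graph nb.
Hypothesis Hconn : connected_graph nb.
Hypothesis Hw : is_weight nb mu.
Hypothesis Hm : 1 < m.
Hypothesis Hp : p < 0.
Hypothesis Hp01 : 1 < p0.
Hypothesis Hp0 : forall x y, y \in nb x -> p0^-1 <= mu x y / vmeas nb mu x.
Hypothesis Hupos : forall x, 0 < u x.
Hypothesis HT : 0 < T.
Hypothesis Hineq : forall x,
  mlap nb mu m u x + u x `^ p * gradn nb mu u x `^ (m - 1) <= 0.

Local Notation vm := (vmeas nb mu).
Local Notation grad := (gradn nb mu u).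
Local Notation g := (gp R m).
Lemma g_mono a b : a <= b -> g a <= g b. Proof. exact: gp_mono. Qed.
Lemma g_ge0 d : 0 <= d -> 0 <= g d. Proof. exact: gp_ge0. Qed.
Lemma g_le0 d : d <= 0 -> g d <= 0. Proof. exact: gp_le0. Qed.
Lemma g_opp d : g (- d) = - g d. Proof. exact: gp_opp. Qed.
Lemma g_pos d : 0 < d -> g d = d `^ (m - 1). Proof. exact: gp_pos. Qed.


Lemma Hsym x y : (y \in nb x) = (x \in nb y).
Proof. by case: Hsg => _ [_ ->]. Qed.
Lemma Hu x : uniq (nb x).
Proof. by case: Hsg. Qed.
Lemma mu_ge0 x y : 0 <= mu x y.
Proof. by case: Hw => _ [_ ->]. Qed.
Lemma mu_sym x y : mu x y = mu y x.
Proof. by case: Hw. Qed.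
Lemma mu_gt0 x y : y \in nb x -> 0 < mu x y.
Proof. by case: Hw => _ [h _] /h. Qed.

Lemma vm_ge0 x : 0 <= vm x.
Proof. by apply: sumr_ge0 => y _; apply: mu_ge0. Qed.

Lemma vm_ge_mu x y : y \in nb x -> mu x y <= vm x.
Proof.
move=> yx; rewrite /vmeas (bigD1_seq y yx (Hu x)) /= lerDl.
by apply: sumr_ge0 => z _; apply: mu_ge0.
Qed.

Lemma Su_eq x : \sum_(y <- nb x) mu x y * g (u y - u x) = vm x * mlap nb mu m u x.
Proof.
rewrite /mlap; have [v0|v0] := eqVneq (vm x) 0.
  rewrite v0 mul0r big_seq big1 // => y yx.
  have h1 := vm_ge_mu _ _ yx; have h2 := mu_ge0 x y.
  have -> : mu x y = 0 by apply/eqP; rewrite eq_le h2 -v0 h1.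
  by rewrite mul0r.
by rewrite mulrA mulfV // mul1r.
Qed.

Definition w x := if u x <= T then u x else T.

Lemma w_le_u x : w x <= u x.
Proof. by rewrite /w; case: ifP => // /negbT; rewrite -ltNge => /ltW. Qed.
Lemma w_le_T x : w x <= T.
Proof. by rewrite /w; case: ifP. Qed.
Lemma w_gt0 x : 0 < w x.
Proof. by rewrite /w; case: ifP. Qed.
Lemma w_eq x : u x <= T -> w x = u x.
Proof. by rewrite /w => ->. Qed.
Lemma w_ltT x : w x < T -> u x < T /\ w x = u x.
Proof. by rewrite /w; case: ifP => _ h; [split | rewrite ltxx in h]. Qed.

Definition E x := \sum_(y <- nb x) mu x y * g (w x - w y).

Lemma E_ge_u x : u x <= T -> vm x * (u x `^ p * grad x `^ (m - 1)) <= E x.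
Proof.
move=> uxT.
have h1 : \sum_(y <- nb x) mu x y * g (w y - w x) <= vm x * mlap nb mu m u x.
  rewrite -Su_eq; apply: ler_sum => y _; apply: ler_wpM2l; first exact: mu_ge0.
  by apply: g_mono; rewrite (w_eq _ uxT) lerD2r w_le_u.
have h2 : E x = - \sum_(y <- nb x) mu x y * g (w y - w x).
  rewrite -sumrN; apply: eq_bigr => y _.
  by rewrite -mulrN -g_opp opprB.
have h3 := Hineq x.
have h4 : vm x * mlap nb mu m u x <= - (vm x * (u x `^ p * grad x `^ (m - 1))).
  rewrite -mulrN; apply: ler_wpM2l; first exact: vm_ge0.
  by move: h3; lra.
rewrite h2 lerNr; exact: le_trans h1 h4.
Qed.

Lemma E_ge0 x : 0 <= E x.
Proof.
case: (lerP (u x) T) => uxT.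
  apply: le_trans (E_ge_u _ uxT); apply: mulr_ge0; first exact: vm_ge0.
  by apply: mulr_ge0; apply: powR_ge0.
rewrite /E /w ifF; last by apply/negbTE; rewrite -ltNge.
apply: sumr_ge0 => y _; apply: mulr_ge0; first exact: mu_ge0.
apply: g_ge0 => //; rewrite subr_ge0; exact: w_le_T.
Qed.

Definition c1 := Num.sqrt ((2 * p0)^-1).
Definition c2 := c1 `^ (m - 1).
Definition K := (c2 * T `^ p)^-1.

Lemma p0_gt0 : 0 < p0.
Proof. exact: lt_trans Hp01. Qed.
Lemma c1_gt0 : 0 < c1.
Proof. by rewrite /c1 sqrtr_gt0 invr_gt0 mulr_gt0 // p0_gt0. Qed.
Lemma c2_gt0 : 0 < c2.
Proof. by rewrite /c2 powR_gt0 // c1_gt0. Qed.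
Lemma K_gt0 : 0 < K.
Proof. by rewrite /K invr_gt0 mulr_gt0 ?c2_gt0 ?powR_gt0. Qed.

Lemma grad_lb x y : x \in nb y -> c1 * `|u x - u y| <= grad y.
Proof.
move=> xy.
have vy : 0 < vm y by apply: lt_le_trans (mu_gt0 _ _ xy) (vm_ge_mu _ _ xy).
rewrite /c1 -sqrtr_sqr -sqrtrM; last by rewrite invr_ge0 mulr_ge0 // ltW // p0_gt0.
rewrite /gradn.
rewrite ler_sqrt; last first.
  apply: sumr_ge0 => z _; apply: mulr_ge0; last exact: sqr_ge0.
  by apply: divr_ge0; [apply: mu_ge0 | apply: mulr_ge0; [ | apply: vm_ge0]].
rewrite (bigD1_seq x xy (Hu y)) /=.
rewrite -[X in X <= _]addr0; apply: lerD; last first.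
  apply: sumr_ge0 => z _; apply: mulr_ge0; last exact: sqr_ge0.
  by apply: divr_ge0; [apply: mu_ge0 | apply: mulr_ge0; [ | apply: vm_ge0]].
apply: ler_wpM2r; first exact: sqr_ge0.
have := Hp0 _ _ xy.
have -> : mu y x / (2 * vm y) = 2^-1 * (mu y x / vm y) by rewrite invfM; ring.
by rewrite invfM => h; apply: ler_wpM2l.
Qed.

Lemma powR_anti a b : 0 < a -> a <= b -> b `^ p <= a `^ p.
Proof.
move=> a0 ab; have b0 : 0 < b := lt_le_trans a0 ab.
have e x : x `^ p = (x `^ (- p))^-1 by rewrite -powRN opprK.
rewrite !e lef_pV2 ?posrE ?powR_gt0 //.
apply: ge0_ler_powR => //; first by rewrite oppr_ge0 ltW.
- by rewrite nnegrE ltW.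
- by rewrite nnegrE ltW.
Qed.

Definition H y := if u y < T then grad y `^ (m - 1) / c2 else 0.

Lemma H_ge0 y : 0 <= H y.
Proof.
rewrite /H; case: ifP => // _; apply: divr_ge0; first exact: powR_ge0.
exact: ltW c2_gt0.
Qed.

Lemma edge_bound x y : y \in nb x -> mu x y * g (w x - w y) <= mu x y * H y.
Proof.
move=> yx; apply: ler_wpM2l; first exact: mu_ge0.
case: (lerP (w x - w y) 0) => d0.
  by apply: le_trans (H_ge0 y); apply: g_le0.
have wyT : w y < T.
  by apply: lt_le_trans (w_le_T x); rewrite -subr_gt0.
have [uyT wyu] := w_ltT _ wyT.
rewrite /H uyT (g_pos _ d0) ler_pdivlMr ?c2_gt0 //.
have xy : x \in nb y by rewrite -Hsym.
have hg := grad_lb _ _ xy.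
have hd : w x - w y <= `|u x - u y|.
  rewrite wyu; apply: le_trans (ler_norm _); rewrite lerD2r; exact: w_le_u.
rewrite /c2 -powRM; last exact: ltW c1_gt0.
  apply: ge0_ler_powR.
  - by rewrite subr_ge0 ltW.
  - by rewrite nnegrE mulr_ge0 // ltW // c1_gt0.
  - by rewrite nnegrE /gradn sqrtr_ge0.
  - rewrite mulrC; apply: le_trans hg; apply: ler_wpM2l => //; exact: ltW c1_gt0.
by apply: ltW.
Qed.

Lemma H_bound y : vm y * H y <= K * E y.
Proof.
rewrite /H; case: ifP => uyT; last first.
  by rewrite mulr0 mulr_ge0 ?E_ge0 // ltW // K_gt0.
have h := E_ge_u _ (ltW uyT).
have hp := powR_anti _ _ (Hupos y) (ltW uyT).
apply: (le_trans _ (ler_wpM2l (ltW K_gt0) h)).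
have Tp0 : 0 < T `^ p by apply: powR_gt0.
have -> : vm y * (grad y `^ (m - 1) / c2) =
    K * (vm y * (T `^ p * grad y `^ (m - 1))).
  by rewrite /K; field; rewrite !gt_eqF // c2_gt0.
apply: ler_wpM2l; first exact: ltW K_gt0.
apply: ler_wpM2l; first exact: vm_ge0.
by apply: ler_wpM2r => //; apply: powR_ge0.
Qed.

Local Notation B n := (bseq V nb o n).
Definition D n := \sum_(x <- B n) E x.

Lemma B_uniq n : uniq (B n). Proof. exact: bseq_uniq. Qed.
Lemma memB n x : (x \in B n) = (gdist nb o x <= n)%N.
Proof. exact: mem_bseq. Qed.

Lemma D_flux n : D n =
  \sum_(x <- B n) \sum_(y <- nb x | y \notin B n) mu x y * g (w x - w y).
Proof.
apply: (flux _ _ nb Hsym Hu (fun x y => mu x y * g (w x - w y))) => //; last exact: B_uniq.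
by move=> x y /=; rewrite (mu_sym y x) -[w y - w x]opprB g_opp mulrN.
Qed.

Lemma D_split n : D n.+1 = D n + \sum_(y <- B n.+1 | y \notin B n) E y.
Proof.
have -> : D n.+1 = \sum_(y <- B n.+1 | y \in B n) E y + \sum_(y <- B n.+1 | y \notin B n) E y.
  rewrite /D [X in _ = X + _]big_mkcond [X in _ = _ + X]big_mkcond -big_split.
  by apply: eq_bigr => y _; case: (y \in B n) => /=; rewrite ?addr0 ?add0r.
congr (_ + _).
rewrite (sum_filter_swap (B_uniq _) (B_uniq _)) big_seq_cond /D [RHS]big_seq.
apply: eq_bigl => y; apply/andb_idr; rewrite !memB; exact: leqW.
Qed.

Lemma D_step n : D n <= K * (D n.+1 - D n).
Proof.
rewrite D_split [X in K * X]addrAC subrr add0r D_flux.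
have s1 : \sum_(x <- B n) \sum_(y <- nb x | y \notin B n) mu x y * g (w x - w y)
    <= \sum_(x <- B n) \sum_(y <- nb x | y \notin B n) mu x y * H y.
  apply: ler_sum => x _; rewrite big_seq_cond [X in _ <= X]big_seq_cond.
  by apply: ler_sum => y /andP [yx _]; apply: edge_bound.
apply: le_trans s1 _.
have s2 : \sum_(x <- B n) \sum_(y <- nb x | y \notin B n) mu x y * H y =
    \sum_(y <- B n.+1) \sum_(x <- B n) (if (y \in nb x) && (y \notin B n) then mu x y * H y else 0).
  rewrite exchange_big /= big_seq [RHS]big_seq; apply: eq_bigr => x xB.
  rewrite (sum_change_seq (Hu x) (B_uniq n.+1)) ?big_mkcond //.
  by move=> y yx _; apply: bseq_nb xB yx.
rewrite s2 mulr_sumr [X in _ <= X]big_mkcond /=; apply: ler_sum => y _.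
case: ifP => yB; last first.
  by rewrite big1 // => x _; rewrite andbF.
apply: le_trans (H_bound y).
under eq_bigr => x _ do rewrite ?yB ?andbT Hsym mu_sym.
rewrite -big_mkcond /= (sum_filter_swap (B_uniq n) (Hu y)) /vmeas mulr_suml.
rewrite [X in _ <= X]big_mkcond [X in X <= _]big_mkcond.
apply: ler_sum => x _; case: ifP => // _.
by apply: mulr_ge0; [apply: mu_ge0 | apply: H_ge0].
Qed.

Lemma Wo_B n : Wo nb mu o n =
  \sum_(x <- B n) \sum_(y <- nb x | (gdist nb o x < gdist nb o y)%N) mu x y.
Proof.
rewrite /Wo (fsbigE (B n)); last 3 first.
- exact: B_uniq.
- by move=> x /= xB; rewrite /Defs.ball /= -memB.
- by move=> x /= bx; rewrite memB bx.
rewrite big_seq_cond [RHS]big_seq /=; apply: congr_big => // x.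
by apply/andb_idr => xB; apply: mem_set; rewrite /Defs.ball /= -memB.
Qed.

Lemma D_W n : D n <= T `^ (m - 1) * Wo nb mu o n.
Proof.
rewrite D_flux Wo_B big_seq mulr_sumr [X in _ <= X]big_seq.
apply: ler_sum => x xB.
rewrite mulr_sumr big_mkcond [X in _ <= X]big_mkcond; apply: ler_sum => y _.
case: ifP => yB.
  have -> : (gdist nb o x < gdist nb o y)%N.
    by move: xB yB; rewrite !memB -ltnNge; apply: leq_ltn_trans.
  rewrite mulrC; apply: ler_wpM2r; first exact: mu_ge0.
  rewrite -g_pos //; apply: g_mono.
  have := w_le_T x; have := w_gt0 y; lra.
by case: ifP => // _; apply: mulr_ge0; [apply: powR_ge0 | apply: mu_ge0].
Qed.

Lemma D_ge0 n : 0 <= D n.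
Proof. by apply: sumr_ge0 => x _; apply: E_ge0. Qed.

Lemma D_pos x0 y0 : u x0 <= T -> y0 \in nb x0 -> u y0 != u x0 ->
  0 < D (gdist nb o x0).
Proof.
move=> uxT yx neq.
have hE : 0 < E x0.
  apply: lt_le_trans (E_ge_u _ uxT).
  have vx : 0 < vm x0 by apply: lt_le_trans (mu_gt0 _ _ yx) (vm_ge_mu _ _ yx).
  apply: mulr_gt0 => //; apply: mulr_gt0; first exact: powR_gt0.
  apply: powR_gt0; apply: lt_le_trans (grad_lb _ _ yx).
  by apply: mulr_gt0; [apply: c1_gt0 | rewrite normr_gt0 subr_eq0].
have xB : x0 \in B (gdist nb o x0) by rewrite memB.
rewrite /D (bigD1_seq x0 xB (B_uniq _)) /=.
apply: lt_le_trans hE _; rewrite lerDl; apply: sumr_ge0 => x _; exact: E_ge0.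
Qed.

Lemma D_grow N k : D N * (1 + K^-1) ^+ k <= D (N + k).
Proof.
elim: k => [|k IH]; first by rewrite expr0 mulr1 addn0.
rewrite addnS exprS mulrA (mulrC _ (1 + _)) -mulrA.
have h := D_step (N + k).
have : D (N + k) * (1 + K^-1) <= D (N + k).+1.
  have K0 := K_gt0.
  rewrite -subr_ge0; rewrite -subr_ge0 in h.
  have -> : D (N + k).+1 - D (N + k) * (1 + K^-1) =
     K^-1 * (K * (D (N + k).+1 - D (N + k)) - D (N + k)).
    by field; rewrite gt_eqF.
  by apply: mulr_ge0 => //; rewrite invr_ge0 ltW.
apply: le_trans; rewrite mulrC; apply: ler_wpM2r => //.
by rewrite addr_ge0 // invr_ge0 ltW // K_gt0.
Qed.

End Main.

Lemma find_edge {R : realType} {V : choiceType} {nb : V -> seq V} {u : V -> R} {b} :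
  forall {k a}, walk nb k a b -> u a < u b ->
  exists x y, [/\ y \in nb x, u y != u x & u x < u b].
Proof.
elim=> [|k IH] a /=.
  by move=> ->; rewrite ltxx.
move=> [z za wz] ab.
have [e|ne] := eqVneq (u z) (u a).
  by apply: (IH z wz); rewrite e.
by exists a, z; split.
Qed.

Theorem theorem1p1 (R : realType) (V : choiceType) (nb : V -> seq V)
  (mu : V -> V -> R) (m p q : R) (o : V) :
  simple_graph nb -> connected_graph nb -> infinite_graph V ->
  is_weight nb mu -> cond_p0 nb mu -> 1 < m ->
  p < 0 -> q = m - 1 ->
  (exists (alpha C : R) (n1 : nat), 0 < alpha /\ 0 < C /\
     forall n : nat, (n1 <= n)%N -> Wo nb mu o n <= C * n%:R `^ alpha) ->
  ~ exists u : V -> R, nontriv_pos_sol nb mu m p q u.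
Proof.
move=> Hsg Hconn _ Hw [p0 [Hp01 Hp0]] Hm Hp -> [al [C [n1 [al0 [C0 HW]]]]].
move=> [u [Hupos [[a [b neq]] Hineq]]].
have [a' [b' lt]] : exists a' b', u a' < u b'.
  have [h|h] : u a < u b \/ u b < u a.
    by move: neq; rewrite neq_lt => /orP.
  - by exists a, b.
  - by exists b, a.
have [k wk] := Hconn a' b'.
have [x0 [y0 [yx ne xlt]]] := find_edge wk lt.
set T := u b'.
have HT : 0 < T := Hupos b'.
set N := gdist nb o x0.
have Dpos := D_pos R V nb mu m p p0 T u o Hsg Hconn Hw Hm Hp01 Hp0 Hupos Hineq x0 y0 (ltW xlt) yx ne.
apply: (@exp_vs_poly R (1 + (K R m p p0 T)^-1) (D R V nb mu m T u o N)
          (T `^ (m - 1) * C) al N n1).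
- by rewrite ltrDl invr_gt0 K_gt0.
- exact: Dpos.
- by apply: mulr_gt0 => //; apply: powR_gt0.
- exact: al0.
move=> k' hk; rewrite mulrC.
apply: le_trans (D_grow R V nb mu m p p0 T u o Hsg Hconn Hw Hm Hp Hp01 Hp0 Hupos HT Hineq N k') _.
apply: le_trans (D_W R V nb mu m T u o Hsg Hconn Hw Hm Hupos HT (N + k')) _.
rewrite -mulrA; apply: ler_wpM2l; first exact: powR_ge0.
by apply: HW; apply: leq_trans hk (leq_addl _ _).
Qed.
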